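(* Let $a$ and $b$ be relatively prime integers with $1<a<b$ and $S=\langle a,b\rangle$. Let $x\in I(S)$. If $n$ is the smallest positive integer such that $x+na\in S$, then $x+na\in b\mathbb{N}$.
   Context: $\mathbb{N}$ is the set of nonnegative integers, $b\mathbb{N}=\{bk:k\in\mathbb{N}\}$, and $\langle a,b\rangle=\{\lambda_1a+\lambda_2b:\lambda_1,\lambda_2\in\mathbb{N}\}$. $I(S)$ is the set of isolated gaps of $S$, i.e. elements $x\in\mathbb{N}\setminus S$ with $x-1,x+1\in S$. *)

(* Defs.v *)
From mathcomp Require Import all_boot.

Definition in_sg2 (a b x : nat) : Prop := exists l1 l2 : nat, x = l1 * a + l2 * b.

Definition is_gap (a b x : nat) : Prop := ~ in_sg2 a b x.

(* Isolated gaps I(S): gaps x with x-1 and x+1 in S (x >= 1 so that x-1 is in N). *)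
Definition isolated_gap (a b x : nat) : Prop :=
  is_gap a b x /\ 0 < x /\ in_sg2 a b x.-1 /\ in_sg2 a b x.+1.

Definition in_multiples (b y : nat) : Prop := exists k : nat, y = b * k.

(* Main.v *)
Require Import Defs.
From mathcomp Require Import all_boot.
From mathcomp Require Import zify.

Theorem lemma4p5 (a b x n : nat) :
  coprime a b -> 1 < a -> a < b ->
  isolated_gap a b x ->
  0 < n -> in_sg2 a b (x + n * a) ->
  (forall m : nat, 0 < m -> m < n -> ~ in_sg2 a b (x + m * a)) ->
  in_multiples b (x + n * a).
Proof.
move=> _ _ _ [Hg _] Hn [l1 [l2 E]] Hmin.
case: l1 E => [|l1] E.
  by exists l2; rewrite E mul0n add0n mulnC.
case: n Hn E Hmin => [//|[|n]] _ E Hmin.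
  exfalso; apply: Hg; exists l1, l2; lia.
exfalso; apply: (Hmin n.+1) => //.
exists l1, l2; lia.
Qed.
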